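(* (Unconditional stability of the one-dimensional Crank–Nicolson collocation scheme.) Let $\mathcal A$ be the one-dimensional piecewise quadratic collocation matrix (see context) for $a<b$, $\gamma\in(0,1)$, $M\ge2$. Let $T>0$, $N\ge1$, $\tau=T/N$, and set $C_a=\frac{2(b-a)^{1-\gamma}}{1-\gamma}$. If vectors $\varepsilon^0,\varepsilon^1,\dots,\varepsilon^N\in\mathbb R^{2M-1}$ satisfy $$\Big(I+\frac{\tau}{2}\mathcal A\Big)\varepsilon^k=\Big(I-\frac{\tau}{2}\mathcal A\Big)\varepsilon^{k-1},\qquad k=1,\dots,N,$$ then $\|\varepsilon^k\|_\infty\le e^{TC_a}\|\varepsilon^0\|_\infty$ for all $k=0,1,\dots,N$. (In particular, the difference of two solutions of the scheme with the same data but different initial values is bounded in this way, for every $M$ and every $\tau$.)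
   Context: Fix real numbers $a<b$, an exponent $\gamma\in(0,1)$ and an integer $M\ge 2$. Set $h=(b-a)/M$ and $x_s=a+sh$ for $s\in\{0,\tfrac12,1,\tfrac32,\dots,M\}$. The piecewise quadratic Lagrange basis functions on $[a,b]$ are: for integers $0\le l\le M$, $\phi_l(x)=\frac{x-x_{l-1}}{h}\cdot\frac{2x-(x_l+x_{l-1})}{h}$ for $x\in[x_{l-1},x_l]\cap[a,b]$, $\phi_l(x)=\frac{x_{l+1}-x}{h}\cdot\frac{(x_{l+1}+x_l)-2x}{h}$ for $x\in[x_l,x_{l+1}]\cap[a,b]$, and $\phi_l(x)=0$ otherwise; and for $l=1,\dots,M$, $\phi_{l-\frac12}(x)=\frac{4(x-x_{l-1})(x_l-x)}{h^2}$ for $x\in[x_{l-1},x_l]$ and $0$ otherwise. For $i\in\{1,\dots,2M-1\}$ and $j\in\{0,1,\dots,2M\}$ define $$d_i=\int_a^b\frac{dy}{|x_{i/2}-y|^{\gamma}},\qquad g_{ij}=\int_a^b\frac{\phi_{j/2}(y)}{|x_{i/2}-y|^{\gamma}}\,dy .$$ The one-dimensional collocation matrix is the $(2M-1)\times(2M-1)$ matrix $\mathcal A$ with entries $A_{ij}=\delta_{ij}d_i-g_{ij}$, $i,j\in\{1,\dots,2M-1\}$. The following fact, established in earlier work, may be used: $g_{ij}>0$ for all $i,j\in\{1,\dots,2M-1\}$, and $\mathcal A$ is strictly diagonally dominant by rows. For a vector $v$, $\|v\|_\infty=\max_i|v_i|$. *)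

(* Defs.v *)
From Stdlib Require Import Reals Lra Lia Bool.
Local Open Scope bool_scope.
Open Scope R_scope.

Definition Rleb (x y : R) : bool := if Rle_dec x y then true else false.

Fixpoint sum1 (n : nat) (f : nat -> R) : R :=
  match n with
  | O => 0
  | S m => sum1 m f + f (S m)
  end.

Fixpoint vnorm (v : nat -> R) (n : nat) : R :=
  match n with
  | O => 0
  | S m => Rmax (vnorm v m) (Rabs (v (S m)))
  end.

Definition RInt_is (f : R -> R) (lo hi v : R) : Prop :=
  exists pr : Riemann_integrable f lo hi, RiemannInt pr = v.

(* Improper integral over [lo,hi] with a (possible) singularity at the interior
   point c:  l = lim_{e->0+} ( int_lo^{c-e} f + int_{c+e}^hi f ). *)
Definition imp_int (f : R -> R) (lo hi c l : R) : Prop :=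
  forall eps, 0 < eps -> exists delta, 0 < delta /\
    forall e, 0 < e < delta -> lo < c - e -> c + e < hi ->
      exists I1 I2, RInt_is f lo (c - e) I1 /\ RInt_is f (c + e) hi I2 /\
                    Rabs (I1 + I2 - l) < eps.

Definition hstep (a b : R) (M : nat) : R := (b - a) / INR M.
Definition node (a b : R) (M : nat) (s : R) : R := a + s * hstep a b M.

Definition phi_int (a b : R) (M : nat) (l : nat) (y : R) : R :=
  let h := hstep a b M in
  let xm := node a b M (INR l - 1) in
  let xl := node a b M (INR l) in
  let xp := node a b M (INR l + 1) in
  if Rleb a y && Rleb y b && Rleb xm y && Rleb y xl
  then ((y - xm) / h) * ((2 * y - (xl + xm)) / h)
  else if Rleb a y && Rleb y b && Rleb xl y && Rleb y xp
  then ((xp - y) / h) * (((xp + xl) - 2 * y) / h)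
  else 0.

(* phi_{l-1/2}, l = 1..M *)
Definition phi_half (a b : R) (M : nat) (l : nat) (y : R) : R :=
  let h := hstep a b M in
  let xm := node a b M (INR l - 1) in
  let xl := node a b M (INR l) in
  if Rleb xm y && Rleb y xl then 4 * (y - xm) * (xl - y) / (h * h) else 0.

(* phi_{j/2}, j = 0..2M *)
Definition phi (a b : R) (M : nat) (j : nat) (y : R) : R :=
  if Nat.even j then phi_int a b M (Nat.div2 j) y
  else phi_half a b M (Nat.div2 j + 1) y.

Definition colpt (a b : R) (M : nat) (i : nat) : R := node a b M (INR i / 2).

Definition kern (gamma x y : R) : R := / Rpower (Rabs (x - y)) gamma.

Definition Amat (d : nat -> R) (g : nat -> nat -> R) (i j : nat) : R :=
  (if Nat.eqb i j then d i else 0) - g i j.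

Definition Ca (a b gamma : R) : R := 2 * Rpower (b - a) (1 - gamma) / (1 - gamma).

(* Main.v *)
Require Import Defs.
From Stdlib Require Import Reals Lra Lia Bool.
From Coquelicot Require Import Coquelicot.
Open Scope R_scope.
Local Open Scope bool_scope.

Lemma left_int (gamma c lo hi : R) (pr : Riemann_integrable (fun y => kern gamma c y) lo hi) :
  0 < gamma < 1 -> lo < hi < c ->
  RiemannInt pr <= Rpower (c - lo) (1 - gamma) / (1 - gamma).
Proof.
  intros Hg Hh.
  pose (Fa := fun y => - exp ((1 - gamma) * ln (c - y)) / (1 - gamma)).
  assert (H : is_RInt (fun y => kern gamma c y) lo hi (minus (Fa hi) (Fa lo))).
  { apply is_RInt_ext with (f := fun y => exp (-gamma * ln (c - y))).
    - intros x Hx. rewrite Rmin_left in Hx by lra. rewrite Rmax_right in Hx by lra.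
      unfold kern. rewrite Rabs_right by lra. unfold Rpower.
      rewrite <- exp_Ropp. f_equal. ring.
    - apply (is_RInt_derive (V:=R_CompleteNormedModule) Fa).
      + intros x Hx. rewrite Rmin_left in Hx by lra. rewrite Rmax_right in Hx by lra.
        unfold Fa. auto_derive. lra.
        replace (-gamma * ln (c - x)) with ((1-gamma) * ln (c-x) + - ln (c - x)) by ring.
        rewrite exp_plus, exp_Ropp, exp_ln by lra. replace (c + - x) with (c - x) by ring. field. split; lra.
      + intros x Hx. rewrite Rmin_left in Hx by lra. rewrite Rmax_right in Hx by lra.
        apply (ex_derive_continuous (K:=R_AbsRing) (V:=R_NormedModule)). auto_derive. lra. }
  rewrite <- RInt_Reals. rewrite (is_RInt_unique _ _ _ _ H).
  unfold minus, plus, opp; simpl. unfold Fa, Rpower.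
  assert (0 < exp ((1 - gamma) * ln (c - hi))) by apply exp_pos.
  apply Rmult_le_reg_r with (1 - gamma). lra.
  field_simplify; try lra.
Qed.

Lemma right_int (gamma c lo hi : R) (pr : Riemann_integrable (fun y => kern gamma c y) lo hi) :
  0 < gamma < 1 -> c < lo < hi ->
  RiemannInt pr <= Rpower (hi - c) (1 - gamma) / (1 - gamma).
Proof.
  intros Hg Hh.
  pose (Fa := fun y => exp ((1 - gamma) * ln (y - c)) / (1 - gamma)).
  assert (H : is_RInt (fun y => kern gamma c y) lo hi (minus (Fa hi) (Fa lo))).
  { apply is_RInt_ext with (f := fun y => exp (-gamma * ln (y - c))).
    - intros x Hx. rewrite Rmin_left in Hx by lra. rewrite Rmax_right in Hx by lra.
      unfold kern. rewrite Rabs_left by lra. replace (- (c - x)) with (x - c) by ring. unfold Rpower.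
      rewrite <- exp_Ropp. f_equal. ring.
    - apply (is_RInt_derive (V:=R_CompleteNormedModule) Fa).
      + intros x Hx. rewrite Rmin_left in Hx by lra. rewrite Rmax_right in Hx by lra.
        unfold Fa. auto_derive. lra.
        replace (-gamma * ln (x - c)) with ((1-gamma) * ln (x - c) + - ln (x - c)) by ring.
        rewrite exp_plus, exp_Ropp, exp_ln by lra. replace (x + - c) with (x - c) by ring. field. split; lra.
      + intros x Hx. rewrite Rmin_left in Hx by lra. rewrite Rmax_right in Hx by lra.
        apply (ex_derive_continuous (K:=R_AbsRing) (V:=R_NormedModule)). auto_derive. lra. }
  rewrite <- RInt_Reals. rewrite (is_RInt_unique _ _ _ _ H).
  unfold minus, plus, opp; simpl. unfold Fa, Rpower.
  assert (0 < exp ((1 - gamma) * ln (lo - c))) by apply exp_pos.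
  apply Rmult_le_reg_r with (1 - gamma). lra.
  field_simplify; try lra.
Qed.
Lemma Rleb_le x y : Rleb x y = true -> x <= y.
Proof. unfold Rleb. destruct (Rle_dec x y); congruence. Qed.

Lemma aux1 h u : 0 < h -> 0 <= u <= h -> u / h * ((2 * u - h) / h) <= 1.
Proof.
  intros Hh Hu. replace (u / h * ((2 * u - h) / h)) with (u * (2*u - h) / (h*h)) by (field; lra).
  apply Rmult_le_reg_r with (h*h). nra. unfold Rdiv. rewrite Rmult_assoc, Rinv_l by nra. nra.
Qed.

Lemma aux2 h u : 0 < h -> 0 <= u <= h -> 4 * u * (h - u) / (h * h) <= 1.
Proof.
  intros Hh Hu.
  apply Rmult_le_reg_r with (h*h). nra. unfold Rdiv. rewrite Rmult_assoc, Rinv_l by nra. pose proof (pow2_ge_0 (h - 2*u)). nra.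
Qed.

Lemma phi_le1 a b M j y : a < b -> (1 <= M)%nat -> phi a b M j y <= 1.
Proof.
  intros Hab HM.
  assert (Hh : 0 < hstep a b M).
  { unfold hstep. apply Rdiv_lt_0_compat. lra. apply lt_0_INR. lia. }
  unfold phi. destruct (Nat.even j).
  - unfold phi_int. cbv zeta.
    set (h := hstep a b M) in *.
    set (l := INR (Nat.div2 j)).
    destruct (Rleb a y && Rleb y b && Rleb (node a b M (l - 1)) y && Rleb y (node a b M l)) eqn:E1.
    + repeat rewrite andb_true_iff in E1. destruct E1 as [[[_ _] E3] E4].
      apply Rleb_le in E3; apply Rleb_le in E4. unfold node in *. fold h in E3, E4 |- *.
      replace (2 * y - (a + l * h + (a + (l - 1) * h))) with (2 * (y - (a + (l-1)*h)) - h) by ring.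
      apply aux1; auto. split; nra.
    + destruct (Rleb a y && Rleb y b && Rleb (node a b M l) y && Rleb y (node a b M (l + 1))) eqn:E2.
      * repeat rewrite andb_true_iff in E2. destruct E2 as [[[_ _] E3] E4].
        apply Rleb_le in E3; apply Rleb_le in E4. unfold node in *. fold h in E3, E4 |- *.
        replace (a + (l + 1) * h + (a + l * h) - 2 * y) with (2 * (a + (l + 1) * h - y) - h) by ring.
        apply aux1; auto. split; nra.
      * lra.
  - unfold phi_half. cbv zeta.
    set (h := hstep a b M) in *.
    set (l := INR (Nat.div2 j + 1)).
    destruct (Rleb (node a b M (l - 1)) y && Rleb y (node a b M l)) eqn:E1.
    + repeat rewrite andb_true_iff in E1. destruct E1 as [E3 E4].
      apply Rleb_le in E3; apply Rleb_le in E4. unfold node in *. fold h in E3, E4 |- *.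
      replace (a + l * h - y) with (h - (y - (a + (l - 1) * h))) by ring.
      apply aux2; auto. split; nra.
    + lra.
Qed.

Lemma kern_pos g x y : 0 < kern g x y.
Proof. unfold kern, Rpower. apply Rinv_0_lt_compat, exp_pos. Qed.

Lemma d_le a b gamma c d : a < c < b -> 0 < gamma < 1 ->
  imp_int (fun y => kern gamma c y) a b c d -> d <= Ca a b gamma.
Proof.
  intros Hc Hg H. apply Rnot_lt_le; intro Hlt.
  destruct (H (d - Ca a b gamma)) as [delta [Hd Hf]]; [lra|].
  set (e := Rmin (delta/2) (Rmin ((c-a)/2) ((b-c)/2))).
  assert (He1 : 0 < e). { unfold e. repeat apply Rmin_glb_lt; lra. }
  assert (He2 : e <= delta/2 /\ e <= (c-a)/2 /\ e <= (b-c)/2).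
  { unfold e. pose proof (Rmin_l (delta/2) (Rmin ((c-a)/2) ((b-c)/2))).
    pose proof (Rmin_r (delta/2) (Rmin ((c-a)/2) ((b-c)/2))).
    pose proof (Rmin_l ((c-a)/2) ((b-c)/2)). pose proof (Rmin_r ((c-a)/2) ((b-c)/2)). lra. }
  destruct (Hf e) as [I1 [I2 [[p1 E1] [[p2 E2] Hb]]]]; try lra.
  pose proof (left_int gamma c a (c - e) p1 Hg ltac:(lra)) as L1.
  pose proof (right_int gamma c (c + e) b p2 Hg ltac:(lra)) as L2.
  assert (P1 : Rpower (c - a) (1 - gamma) <= Rpower (b - a) (1 - gamma))
    by (apply Rle_Rpower_l; lra).
  assert (P2 : Rpower (b - c) (1 - gamma) <= Rpower (b - a) (1 - gamma))
    by (apply Rle_Rpower_l; lra).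
  assert (Q : I1 + I2 <= Ca a b gamma).
  { rewrite <- E1, <- E2. unfold Ca.
    assert (Rpower (c - a) (1 - gamma) / (1 - gamma) <= Rpower (b - a) (1 - gamma) / (1 - gamma)).
    { apply Rmult_le_compat_r; [left; apply Rinv_0_lt_compat; lra| lra]. }
    assert (Rpower (b - c) (1 - gamma) / (1 - gamma) <= Rpower (b - a) (1 - gamma) / (1 - gamma)).
    { apply Rmult_le_compat_r; [left; apply Rinv_0_lt_compat; lra| lra]. }
    unfold Rdiv in *. lra. }
  apply Rabs_def2 in Hb. lra.
Qed.

Lemma g_le_d a b M gamma c j g d : a < b -> (1 <= M)%nat -> a < c < b ->
  imp_int (fun y => phi a b M j y * kern gamma c y) a b c g ->
  imp_int (fun y => kern gamma c y) a b c d -> g <= d.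
Proof.
  intros Hab HM Hc Hg H. apply Rnot_lt_le; intro Hlt.
  destruct (H ((g - d)/2)) as [delta [Hd Hf]]; [lra|].
  destruct (Hg ((g - d)/2)) as [delta' [Hd' Hf']]; [lra|].
  set (e := Rmin (Rmin (delta/2) (delta'/2)) (Rmin ((c-a)/2) ((b-c)/2))).
  assert (He1 : 0 < e). { unfold e. repeat apply Rmin_glb_lt; lra. }
  assert (He2 : e <= delta/2 /\ e <= delta'/2 /\ e <= (c-a)/2 /\ e <= (b-c)/2).
  { unfold e. pose proof (Rmin_l (Rmin (delta/2) (delta'/2)) (Rmin ((c-a)/2) ((b-c)/2))).
    pose proof (Rmin_r (Rmin (delta/2) (delta'/2)) (Rmin ((c-a)/2) ((b-c)/2))).
    pose proof (Rmin_l (delta/2) (delta'/2)). pose proof (Rmin_r (delta/2) (delta'/2)).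
    pose proof (Rmin_l ((c-a)/2) ((b-c)/2)). pose proof (Rmin_r ((c-a)/2) ((b-c)/2)). lra. }
  destruct (Hf e) as [I1 [I2 [[p1 E1] [[p2 E2] Hb]]]]; try lra.
  destruct (Hf' e) as [J1 [J2 [[q1 F1] [[q2 F2] Hb']]]]; try lra.
  assert (K1 : J1 <= I1).
  { rewrite <- E1, <- F1. apply RiemannInt_P19. lra. intros x _.
    pose proof (phi_le1 a b M j x Hab HM). pose proof (kern_pos gamma c x). nra. }
  assert (K2 : J2 <= I2).
  { rewrite <- E2, <- F2. apply RiemannInt_P19. lra. intros x _.
    pose proof (phi_le1 a b M j x Hab HM). pose proof (kern_pos gamma c x). nra. }
  apply Rabs_def2 in Hb. apply Rabs_def2 in Hb'. lra.
Qed.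
Lemma sum1_ext n f g : (forall j, (1 <= j <= n)%nat -> f j = g j) -> sum1 n f = sum1 n g.
Proof. induction n; simpl; intros H; auto. rewrite IHn by (intros; apply H; lia). rewrite H by lia. ring. Qed.

Lemma sum1_le n f g : (forall j, (1 <= j <= n)%nat -> f j <= g j) -> sum1 n f <= sum1 n g.
Proof. induction n; simpl; intros H. lra. pose proof (IHn ltac:(intros; apply H; lia)). pose proof (H (S n) ltac:(lia)). lra. Qed.

Lemma sum1_abs n f : Rabs (sum1 n f) <= sum1 n (fun j => Rabs (f j)).
Proof. induction n; simpl. rewrite Rabs_R0; lra. eapply Rle_trans. apply Rabs_triang. lra. Qed.

Lemma sum1_scal n f c : sum1 n (fun j => f j * c) = sum1 n f * c.
Proof. induction n; simpl. ring. rewrite IHn. ring. Qed.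

Lemma sum1_split n f i : (1 <= i <= n)%nat ->
  sum1 n f = f i + sum1 n (fun j => if Nat.eqb j i then 0 else f j).
Proof.
  induction n; intros Hi; [lia|]. cbn [sum1].
  destruct (Nat.eq_dec i (S n)) as [->|Hne].
  - rewrite Nat.eqb_refl. rewrite (sum1_ext n (fun j => if Nat.eqb j (S n) then 0 else f j) f). ring.
    intros j Hj. destruct (Nat.eqb_spec j (S n)); [lia|auto].
  - rewrite IHn by lia. destruct (Nat.eqb_spec (S n) i); [lia|]. ring.
Qed.

Lemma vnorm_nonneg v n : 0 <= vnorm v n.
Proof. induction n; simpl. lra. eapply Rle_trans. apply IHn. apply Rmax_l. Qed.

Lemma vnorm_ge v n j : (1 <= j <= n)%nat -> Rabs (v j) <= vnorm v n.
Proof.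
  induction n; intros Hj; [lia|]. simpl.
  destruct (Nat.eq_dec j (S n)) as [->|Hne]. apply Rmax_r.
  eapply Rle_trans. apply IHn. lia. apply Rmax_l.
Qed.

Lemma vnorm_att v n : (1 <= n)%nat -> exists i, (1 <= i <= n)%nat /\ vnorm v n = Rabs (v i).
Proof.
  induction n; intros Hn; [lia|]. simpl.
  destruct (Nat.eq_dec n 0) as [->|Hne].
  - exists 1%nat. split. lia. simpl. apply Rmax_right. apply Rabs_pos.
  - destruct IHn as [i [Hi E]]. lia.
    destruct (Rle_dec (vnorm v n) (Rabs (v (S n)))).
    + exists (S n). split. lia. apply Rmax_right; auto.
    + exists i. split. lia. rewrite Rmax_left; lra.
Qed.

Lemma offdiag_bound n (A : nat -> nat -> R) w i :
  Rabs (sum1 n (fun j => if Nat.eqb j i then 0 else A i j * w j))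
  <= sum1 n (fun j => if Nat.eqb j i then 0 else Rabs (A i j)) * vnorm w n.
Proof.
  eapply Rle_trans. apply sum1_abs. rewrite <- sum1_scal. apply sum1_le.
  intros j Hj. destruct (Nat.eqb j i). rewrite Rabs_R0; lra.
  rewrite Rabs_mult. apply Rmult_le_compat_l. apply Rabs_pos. apply vnorm_ge; auto.
Qed.

Lemma step n (A : nat -> nat -> R) C t u v :
  (1 <= n)%nat -> 0 < t ->
  (forall i, (1 <= i <= n)%nat ->
     0 <= A i i /\ A i i <= C /\
     sum1 n (fun j => if Nat.eqb j i then 0 else Rabs (A i j)) <= A i i) ->
  (forall i, (1 <= i <= n)%nat ->
     u i + t * sum1 n (fun j => A i j * u j) = v i - t * sum1 n (fun j => A i j * v j)) ->
  vnorm u n <= (1 + 2 * t * C) * vnorm v n.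
Proof.
  intros Hn Ht HA Hrec.
  destruct (vnorm_att u n Hn) as [i [Hi EU]].
  destruct (HA i Hi) as [H0 [HC HS]].
  specialize (Hrec i Hi).
  rewrite (sum1_split n (fun j => A i j * u j) i Hi) in Hrec.
  rewrite (sum1_split n (fun j => A i j * v j) i Hi) in Hrec.
  set (Ru := sum1 n (fun j => if Nat.eqb j i then 0 else A i j * u j)) in *.
  set (Rv := sum1 n (fun j => if Nat.eqb j i then 0 else A i j * v j)) in *.
  set (S := sum1 n (fun j => if Nat.eqb j i then 0 else Rabs (A i j))) in *.
  pose proof (offdiag_bound n A u i) as BU. pose proof (offdiag_bound n A v i) as BV.
  fold Ru S in BU. fold Rv S in BV.
  set (U := vnorm u n) in *. set (V := vnorm v n) in *.
  assert (HV : Rabs (v i) <= V) by (apply vnorm_ge; auto).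
  assert (U0 : 0 <= U) by apply vnorm_nonneg.
  assert (V0 : 0 <= V) by apply vnorm_nonneg.
  assert (S0 : 0 <= S).
  { unfold S. apply Rle_trans with (sum1 n (fun _ => 0)).
    { right. clear. induction n; simpl; [auto| rewrite <- IHn; ring]. }
    apply sum1_le. intros j _. destruct (Nat.eqb j i). lra. apply Rabs_pos. }
  set (x := t * A i i). set (s := t * S). set (c := t * C).
  assert (Eq : u i * (1 + x) = v i * (1 - x) - t * Rv - t * Ru) by (unfold x; lra).
  assert (K : U * (1 + x) <= Rabs (1 - x) * V + s * V + s * U).
  { assert (Rabs (u i * (1 + x)) = U * (1 + x)).
    { rewrite Rabs_mult, EU. rewrite (Rabs_pos_eq (1 + x)). reflexivity. unfold x. pose proof (Rmult_le_pos t (A i i)). lra. }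
    rewrite <- H. rewrite Eq.
    unfold Rminus. eapply Rle_trans. apply Rabs_triang. rewrite Rabs_Ropp.
    eapply Rle_trans. apply Rplus_le_compat_r. apply Rabs_triang. rewrite Rabs_Ropp.
    rewrite !Rabs_mult. rewrite (Rabs_pos_eq t) by lra.
    assert (Rabs (v i) * Rabs (1 + - x) <= Rabs (1 + - x) * V).
    { unfold Rminus. rewrite Rmult_comm. apply Rmult_le_compat_l. apply Rabs_pos. auto. }
    assert (t * Rabs Rv <= s * V) by (unfold s; rewrite Rmult_assoc; apply Rmult_le_compat_l; lra).
    assert (t * Rabs Ru <= s * U) by (unfold s; rewrite Rmult_assoc; apply Rmult_le_compat_l; lra).
    lra. }
  assert (Hsx : s <= x) by (unfold s, x; apply Rmult_le_compat_l; lra).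
  assert (Hxc : x <= c) by (unfold c, x; apply Rmult_le_compat_l; lra).
  assert (s0 : 0 <= s) by (unfold s; nra).
  assert (W : Rabs (1 - x) + s <= (1 + 2 * c) * (1 + x - s)).
  { destruct (Rle_dec x 1).
    - rewrite Rabs_pos_eq by lra. nra.
    - rewrite Rabs_left1 by lra. nra. }
  apply Rmult_le_reg_r with (1 + x - s). lra.
  replace ((1 + 2 * t * C) * V * (1 + x - s)) with ((1 + 2 * c) * (1 + x - s) * V) by (unfold c; ring).
  nra.
Qed.

Lemma pow_exp y k : 0 <= y -> (1 + y) ^ k <= exp (INR k * y).
Proof.
  intros Hy. induction k.
  - simpl. rewrite Rmult_0_l, exp_0. lra.
  - rewrite S_INR. replace ((INR k + 1) * y) with (INR k * y + y) by ring. rewrite exp_plus.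
    simpl. rewrite Rmult_comm. apply Rmult_le_compat; try lra.
    apply pow_le; lra.
    destruct (Req_dec y 0) as [->|Hne]. rewrite exp_0; lra. left. apply exp_ineq1; auto.
Qed.

Lemma exp_le a b : a <= b -> exp a <= exp b.
Proof. intros [H|H]. left; apply exp_increasing; auto. subst; lra. Qed.

Theorem theorem3p6 (a b gamma : R) (M : nat) (T : R) (N : nat)
  (d : nat -> R) (g : nat -> nat -> R) (eps : nat -> nat -> R) :
  a < b -> 0 < gamma < 1 -> (2 <= M)%nat -> 0 < T -> (1 <= N)%nat ->
  (forall i, (1 <= i <= 2 * M - 1)%nat ->
     imp_int (fun y => kern gamma (colpt a b M i) y) a b (colpt a b M i) (d i)) ->
  (forall i j, (1 <= i <= 2 * M - 1)%nat -> (1 <= j <= 2 * M - 1)%nat ->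
     imp_int (fun y => phi a b M j y * kern gamma (colpt a b M i) y) a b
             (colpt a b M i) (g i j)) ->
  (forall i j, (1 <= i <= 2 * M - 1)%nat -> (1 <= j <= 2 * M - 1)%nat -> 0 < g i j) ->
  (forall i, (1 <= i <= 2 * M - 1)%nat ->
     sum1 (2 * M - 1) (fun j => if Nat.eqb j i then 0 else Rabs (Amat d g i j))
       < Rabs (Amat d g i i)) ->
  (forall k, (1 <= k <= N)%nat -> forall i, (1 <= i <= 2 * M - 1)%nat ->
     eps k i + (T / INR N) / 2 * sum1 (2 * M - 1) (fun j => Amat d g i j * eps k j)
     = eps (k - 1)%nat i
       - (T / INR N) / 2 * sum1 (2 * M - 1) (fun j => Amat d g i j * eps (k - 1)%nat j)) ->
  forall k, (k <= N)%nat ->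
    vnorm (eps k) (2 * M - 1) <= exp (T * Ca a b gamma) * vnorm (eps 0%nat) (2 * M - 1).
Proof.
  intros Hab Hg HM HT HN Hd Hgij Hpos Hdom Hrec.
  assert (HMpos : 0 < INR M) by (apply lt_0_INR; lia).
  assert (HNpos : 0 < INR N) by (apply lt_0_INR; lia).
  assert (Hint : forall i, (1 <= i <= 2 * M - 1)%nat -> a < colpt a b M i < b).
  { intros i Hi. unfold colpt, node, hstep.
    assert (I1 : 1 <= INR i) by (apply (le_INR 1); lia).
    assert (I2 : INR i + 1 <= 2 * INR M).
    { replace (INR i + 1) with (INR (i + 1)) by (rewrite plus_INR; simpl; ring).
      replace (2 * INR M) with (INR (2 * M)) by (rewrite mult_INR; simpl; ring).
      apply le_INR; lia. }
    set (q := (b - a) / INR M).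
    assert (Hq : 0 < q) by (unfold q; apply Rdiv_lt_0_compat; lra).
    assert (Eb : b = a + INR M * q) by (unfold q; field; lra).
    split; nra. }
  assert (HCa : 0 < Ca a b gamma).
  { unfold Ca, Rpower. apply Rdiv_lt_0_compat. pose proof (exp_pos ((1 - gamma) * ln (b - a))). lra. lra. }
  assert (Hrow : forall i, (1 <= i <= 2 * M - 1)%nat ->
     0 <= Amat d g i i /\ Amat d g i i <= Ca a b gamma /\
     sum1 (2 * M - 1) (fun j => if Nat.eqb j i then 0 else Rabs (Amat d g i j)) <= Amat d g i i).
  { intros i Hi.
    assert (EA : Amat d g i i = d i - g i i) by (unfold Amat; rewrite Nat.eqb_refl; ring).
    pose proof (g_le_d a b M gamma (colpt a b M i) i (g i i) (d i) Hab ltac:(lia) (Hint i Hi)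
                  (Hgij i i Hi Hi) (Hd i Hi)) as G1.
    pose proof (d_le a b gamma (colpt a b M i) (d i) (Hint i Hi) Hg (Hd i Hi)) as D1.
    pose proof (Hpos i i Hi Hi) as P1.
    pose proof (Hdom i Hi) as H1. rewrite EA in H1 |- *. rewrite Rabs_pos_eq in H1 by lra.
    split; [lra|split; lra]. }
  assert (Hind : forall k, (k <= N)%nat ->
     vnorm (eps k) (2 * M - 1) <= (1 + T / INR N * Ca a b gamma) ^ k * vnorm (eps 0%nat) (2 * M - 1)).
  { induction k; intros Hk.
    - simpl. lra.
    - pose proof (step (2 * M - 1) (Amat d g) (Ca a b gamma) (T / INR N / 2) (eps (S k)) (eps k)
                   ltac:(lia) ltac:(apply Rdiv_lt_0_compat; [apply Rdiv_lt_0_compat|]; lra) Hrow) as St.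
      assert (Hr : forall i, (1 <= i <= 2 * M - 1)%nat ->
        eps (S k) i + T / INR N / 2 * sum1 (2 * M - 1) (fun j => Amat d g i j * eps (S k) j) =
        eps k i - T / INR N / 2 * sum1 (2 * M - 1) (fun j => Amat d g i j * eps k j)).
      { intros i Hi. pose proof (Hrec (S k) ltac:(lia) i Hi) as E.
        replace (S k - 1)%nat with k in E by lia. exact E. }
      specialize (St Hr).
      replace (1 + 2 * (T / INR N / 2) * Ca a b gamma) with (1 + T / INR N * Ca a b gamma) in St by (field; lra).
      assert (0 <= 1 + T / INR N * Ca a b gamma).
      { pose proof (Rdiv_lt_0_compat T (INR N) HT HNpos). nra. }
      eapply Rle_trans. apply St. simpl. rewrite Rmult_assoc. idtac.
      apply Rmult_le_compat_l; auto. apply IHk; lia. }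
  intros k Hk. eapply Rle_trans. apply Hind; auto.
  apply Rmult_le_compat_r. apply vnorm_nonneg.
  assert (Ht : 0 < T / INR N) by (apply Rdiv_lt_0_compat; lra).
  eapply Rle_trans. apply pow_exp. nra.
  apply exp_le.
  assert (INR k <= INR N) by (apply le_INR; auto).
  replace (T * Ca a b gamma) with (INR N * (T / INR N) * Ca a b gamma) by (field; lra).
  rewrite <- Rmult_assoc. apply Rmult_le_compat_r. lra. apply Rmult_le_compat_r; lra.
Qed.
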